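(* Suppose the index function satisfies $0\le n(\eta)<5$ for all $\eta>0$. Then along the orbit of every regular perfect fluid solution in the variables $(U,Q,\Omega)$ one has $\Phi(U,Q):=(4-7Q)U-3(1-2Q)>0$, i.e. the regular solutions lie on the outer side of the surface $\{\Phi=0\}$, which is the set of regular orbits of the exact polytrope with index $5$. Moreover, on the surface $\{\Phi=0\}$ within the interior of the cube, $\frac{d\Phi}{d\lambda}=3(1-2Q)(1-U)^2Q\,(5-n(\Omega))$, where $Q\le1/2$ on this surface.
   Context: Equation of state: $\rho=\rho(p)$ with $\rho>0$ for $p>0$, $\eta(p)=\int_0^p dp'/\rho(p')$ finite; index function $n(\eta)=\frac{\eta}{\rho}\frac{d\rho}{d\eta}$. Regular perfect fluid solution: solution of $dm/dr=4\pi r^2\rho(p)$, $dp/dr=-m\rho(p)/r^2$ with $m\to0$, $p\to p_c\in(0,\infty)$ as $r\to0$. Variables: $U=u/(1+u)$, $Q=q/(1+q)$, $\Omega=\omega/(1+\omega)$ with $u=4\pi r^3\rho/m$, $q=m/(r\eta)$, $\omega=\eta^a$ ($a>0$), satisfying $\frac{dU}{d\lambda}=U(1-U)[(1-Q)(3-4U)-n(\Omega)Q(1-U)]$, $\frac{dQ}{d\lambda}=Q(1-Q)[(2U-1)(1-Q)+Q(1-U)]$, $\frac{d\Omega}{d\lambda}=-a\Omega(1-\Omega)Q(1-U)$ on the cube $[0,1]^3$, where $n(\Omega)=n(\eta)$ at $\eta=(\Omega/(1-\Omega))^{1/a}$. Regular orbits emanate as $\lambda\to-\infty$ from the line $\{U=3/4,Q=0\}$.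 *)

(* Defs.v *)
From Stdlib Require Import Reals Lra.
From Coquelicot Require Import Coquelicot.
Open Scope R_scope.

Definition eos_eta (rho : R -> R) (p : R) : R :=
  RInt_gen (fun x => / rho x) (at_right 0) (at_point p).

(* index function n(eta) = (eta/rho) d rho/d eta, where rho is viewed as a
   function of eta through the inverse P of p |-> eta(p). *)
Definition index_fun (rho P : R -> R) (e : R) : R :=
  e / rho (P e) * Derive (fun x => rho (P x)) e.

Definition nOmega (rho P : R -> R) (a W : R) : R :=
  index_fun rho P (Rpower (W / (1 - W)) (1 / a)).

Definition FU (n : R -> R) (U Q W : R) : R :=
  U * (1 - U) * ((1 - Q) * (3 - 4 * U) - n W * Q * (1 - U)).
Definition FQ (U Q : R) : R :=
  Q * (1 - Q) * ((2 * U - 1) * (1 - Q) + Q * (1 - U)).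
Definition FW (a U Q W : R) : R :=
  - a * W * (1 - W) * Q * (1 - U).

Definition Phi (U Q : R) : R := (4 - 7 * Q) * U - 3 * (1 - 2 * Q).

Definition u_var (rho m p : R -> R) (r : R) : R :=
  4 * PI * r ^ 3 * rho (p r) / m r.
Definition q_var (rho m p : R -> R) (r : R) : R :=
  m r / (r * eos_eta rho (p r)).
Definition U_var (rho m p : R -> R) (r : R) : R :=
  u_var rho m p r / (1 + u_var rho m p r).
Definition Q_var (rho m p : R -> R) (r : R) : R :=
  q_var rho m p r / (1 + q_var rho m p r).

(* Main.v *)
Require Import Defs.
From Stdlib Require Import Reals Lra.
From Coquelicot Require Import Coquelicot.
Open Scope R_scope.

Lemma at_right0_pick (Q : R -> Prop) : at_right 0 Q -> forall c, 0 < c -> exists a, 0 < a < c /\ Q a.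
Proof.
  intros [eps He] c Hc.
  exists (Rmin (eps/2) (c/2)).
  assert (0 < Rmin (eps/2) (c/2)) by (apply Rmin_glb_lt; generalize (cond_pos eps); lra).
  split; [split; [lra| generalize (Rmin_r (eps/2) (c/2)); lra]|].
  apply He; auto.
  unfold ball; simpl; unfold AbsRing_ball, abs, minus, plus, opp; simpl.
  rewrite Ropp_0, Rplus_0_r, Rabs_pos_eq by lra.
  generalize (Rmin_l (eps/2) (c/2)) (cond_pos eps); lra.
Qed.

Lemma eta_exRInt (rho : R -> R)
  (Heta : forall p, 0 < p -> ex_RInt_gen (fun x => / rho x) (at_right 0) (at_point p)) :
  forall p1 p2, 0 < p1 -> 0 < p2 -> ex_RInt (fun x => / rho x) p1 p2.
Proof.
  assert (K : forall p1 p2, 0 < p1 <= p2 -> ex_RInt (fun x => / rho x) p1 p2).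
  { intros p1 p2 [H1 H2].
    destruct (Heta p2 ltac:(lra)) as [l Hl].
    specialize (Hl (fun _ => True) (filter_true)).
    destruct Hl as [Qa Rb HQ HR Hall].
    destruct (at_right0_pick Qa HQ p1 H1) as [a [Ha HQa]].
    destruct (Hall a p2 HQa HR) as [y [Hy _]]. simpl in Hy.
    apply (@ex_RInt_Chasles_2 R_CompleteNormedModule _ a). lra. exists y; exact Hy. }
  intros p1 p2 H1 H2. destruct (Rle_dec p1 p2).
  - apply K; lra.
  - apply ex_RInt_swap, K; lra.
Qed.

Lemma eta_split (rho : R -> R)
  (Heta : forall p, 0 < p -> ex_RInt_gen (fun x => / rho x) (at_right 0) (at_point p)) :
  forall p1 p2, 0 < p1 -> 0 < p2 ->
   eos_eta rho p2 = eos_eta rho p1 + RInt (fun x => / rho x) p1 p2.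
Proof.
  intros p1 p2 H1 H2. unfold eos_eta.
  assert (E := eta_exRInt rho Heta p1 p2 H1 H2).
  rewrite <- (RInt_gen_at_point _ _ _ E).
  symmetry. apply (RInt_gen_Chasles (fun x => / rho x) p1).
  - apply Heta; auto.
  - exists (RInt (fun x => / rho x) p1 p2). apply is_RInt_gen_at_point. apply RInt_correct. exact E.
Qed.

Lemma at_right0_lt c : 0 < c -> at_right 0 (fun a => 0 < a < c).
Proof.
  intros Hc. exists (mkposreal c Hc). intros y Hy Hy0.
  unfold ball in Hy; simpl in Hy; unfold AbsRing_ball, abs, minus, plus, opp in Hy; simpl in Hy.
  rewrite Ropp_0, Rplus_0_r, Rabs_pos_eq in Hy by lra. lra.
Qed.

Lemma prod_lt p (P : R * R -> Prop) : 0 < p -> (forall a, 0 < a < p -> P (a, p)) ->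
  filter_prod (at_right 0) (at_point p) P.
Proof.
  intros Hp H. apply (Filter_prod _ _ _ (fun a => 0 < a < p) (fun b => b = p)).
  - apply at_right0_lt; auto.
  - reflexivity.
  - intros x y Hx ->. apply H; auto.
Qed.

Lemma eta_nonneg (rho : R -> R)
  (Hrho : forall p, 0 < p -> 0 < rho p)
  (Heta : forall p, 0 < p -> ex_RInt_gen (fun x => / rho x) (at_right 0) (at_point p)) :
  forall p, 0 < p -> 0 <= eos_eta rho p.
Proof.
  intros p Hp.
  assert (C := RInt_gen_correct (fun x => / rho x) (Heta p Hp)).
  assert (C0 := is_RInt_gen_scal (fun x => / rho x) 0 _ C).
  assert (P1 : filter_prod (at_right 0) (at_point p) (fun ab : R * R => fst ab <= snd ab)).
  { apply prod_lt; auto. intros a Ha; simpl; lra. }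
  assert (P2 : filter_prod (at_right 0) (at_point p) (fun ab : R * R =>
     forall x : R, fst ab <= x <= snd ab -> norm (scal 0 (/ rho x)) <= / rho x)).
  { apply prod_lt; auto. intros a Ha; simpl. intros x Hx.
    unfold norm, scal; simpl; unfold mult, abs; simpl; rewrite Rmult_0_l, Rabs_R0. left; apply Rinv_0_lt_compat, Hrho; lra. }
  assert (N := RInt_gen_norm (fun y => scal 0 (/ rho y)) (fun x => / rho x) _ _ P1 P2 C0 C).
  revert N; unfold norm, scal; simpl; unfold mult, abs; simpl; rewrite Rmult_0_l, Rabs_R0. auto.
Qed.

Lemma eta_cont (rho : R -> R)
  (Hrho : forall p, 0 < p -> 0 < rho p)
  (Heta : forall p, 0 < p -> ex_RInt_gen (fun x => / rho x) (at_right 0) (at_point p)) :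
  forall p, 0 < p -> continuous (eos_eta rho) p.
Proof.
  intros p Hp.
  destruct (ex_RInt_ub _ _ _ (eta_exRInt rho Heta (p/2) (2*p) ltac:(lra) ltac:(lra))) as [M HM].
  rewrite Rmin_left, Rmax_right in HM by lra.
  apply continuity_pt_filterlim.
  intros eps Heps.
  exists (Rmin (p/2) (eps / (Rabs M + 1))).
  assert (HMp : 0 < Rabs M + 1) by (generalize (Rabs_pos M); lra).
  split.
  { apply Rmin_glb_lt. lra. apply Rdiv_lt_0_compat; lra. }
  intros x [_ Hx]. simpl in Hx. unfold Rdist in *.
  assert (Hx1 : Rabs (x - p) < p/2) by (generalize (Rmin_l (p/2) (eps / (Rabs M + 1))); lra).
  assert (Hx2 : Rabs (x - p) < eps / (Rabs M + 1)) by (generalize (Rmin_r (p/2) (eps / (Rabs M + 1))); lra).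
  assert (Hxp : p/2 < x < 2 * p) by (apply Rabs_def2 in Hx1; lra).
  rewrite (eta_split rho Heta p x Hp ltac:(lra)).
  pose (I := (RInt (fun x0 : R => / rho x0) p x : R)). fold I. simpl; unfold Rdist.
  replace (eos_eta rho p + I - eos_eta rho p) with I by ring.
  assert (E := eta_exRInt rho Heta p x Hp ltac:(lra)).
  assert (HB : forall y, Rmin p x <= y <= Rmax p x -> norm (/ rho y) <= M).
  { intros y Hy. apply HM.
    split; [apply Rle_trans with (Rmin p x); [apply Rmin_glb|]|apply Rle_trans with (Rmax p x); [|apply Rmax_lub]]; lra. }
  assert (B := norm_RInt_le_const_abs (fun x0 => / rho x0) p x _ M HB (RInt_correct _ _ _ E)).
  unfold norm in B; simpl in B; unfold abs in B; simpl in B. fold I in B.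
  apply Rle_lt_trans with (1 := B).
  apply Rle_lt_trans with (Rabs (x - p) * (Rabs M + 1)).
  { apply Rmult_le_compat_l. apply Rabs_pos. generalize (Rle_abs M); lra. }
  apply Rlt_le_trans with (eps / (Rabs M + 1) * (Rabs M + 1)).
  { apply Rmult_lt_compat_r; lra. }
  right; field; lra.
Qed.

Lemma locally_pos p : 0 < p -> locally p (fun y => 0 < y).
Proof.
  intros Hp. exists (mkposreal p Hp). intros y Hy.
  unfold ball in Hy; simpl in Hy; unfold AbsRing_ball, abs, minus, plus, opp in Hy; simpl in Hy.
  apply Rabs_def2 in Hy. lra.
Qed.

Lemma rho_cont (rho P : R -> R)
  (Hrho : forall p, 0 < p -> 0 < rho p)
  (Heta : forall p, 0 < p -> ex_RInt_gen (fun x => / rho x) (at_right 0) (at_point p))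
  (HP : forall p, 0 < p -> P (eos_eta rho p) = p)
  (Hd : forall p, 0 < p -> ex_derive (fun x => rho (P x)) (eos_eta rho p)) :
  forall p, 0 < p -> continuous rho p.
Proof.
  intros p Hp.
  assert (C : continuous (fun y => rho (P (eos_eta rho y))) p).
  { apply (continuous_comp (eos_eta rho) (fun x => rho (P x))).
    + apply eta_cont; auto.
    + apply (@ex_derive_continuous R_AbsRing R_NormedModule), Hd; auto. }
  apply (continuous_ext_loc rho (fun y => rho (P (eos_eta rho y)))); [|exact C].
  generalize (locally_pos p Hp). apply filter_imp. intros y Hy. rewrite HP; auto.
Qed.

Lemma eta_deriv (rho P : R -> R)
  (Hrho : forall p, 0 < p -> 0 < rho p)
  (Heta : forall p, 0 < p -> ex_RInt_gen (fun x => / rho x) (at_right 0) (at_point p))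
  (HP : forall p, 0 < p -> P (eos_eta rho p) = p)
  (Hd : forall p, 0 < p -> ex_derive (fun x => rho (P x)) (eos_eta rho p)) :
  forall p, 0 < p -> is_derive (eos_eta rho) p (/ rho p).
Proof.
  intros p Hp.
  assert (D : is_derive (fun x => eos_eta rho x - eos_eta rho (p/2)) p (/ rho p)).
  { apply (is_derive_RInt (fun x => / rho x) _ (p/2)).
    - generalize (locally_pos p Hp). apply filter_imp. intros y Hy.
      rewrite (eta_split rho Heta (p/2) y ltac:(lra) Hy).
      pose (I := (RInt (fun x0 : R => / rho x0) (p/2) y : R)). fold I.
      replace (eos_eta rho (p / 2) + I - eos_eta rho (p / 2)) with I by ring.
      unfold I; apply (@RInt_correct R_CompleteNormedModule), eta_exRInt; auto; lra.
    - apply continuous_Rinv_comp.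
      + apply (rho_cont rho P); auto.
      + generalize (Hrho p Hp); lra. }
  assert (D2 := is_derive_plus _ (fun _ => eos_eta rho (p/2)) _ _ _ D (is_derive_const (eos_eta rho (p/2)) p)).
  replace (/ rho p) with (plus (/ rho p) zero) by (unfold plus, zero; simpl; ring).
  eapply is_derive_ext; [|exact D2].
  intro t; simpl. unfold plus; simpl. ring.
Qed.

Lemma G_deriv (m R1 E : R -> R) s dm dR dE :
  is_derive m s dm -> is_derive R1 s dR -> is_derive E s dE -> s <> 0 ->
  is_derive (fun s => 4*PI*s^3*R1 s*E s + 3*(m s)^2/s - 3*m s*E s) s
   (12*PI*s^2*R1 s*E s + 4*PI*s^3*(dR*E s + R1 s*dE) + 6*m s*dm/s - 3*(m s)^2/s^2
     - 3*(dm * E s + m s * dE)).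
Proof.
  intros Hm HR HE Hs. auto_derive.
  - repeat split; auto; eexists; eauto.
  - replace (Derive (fun x => m x) s) with dm by (symmetry; apply is_derive_unique; auto).
    replace (Derive (fun x => R1 x) s) with dR by (symmetry; apply is_derive_unique; auto).
    replace (Derive (fun x => E x) s) with dE by (symmetry; apply is_derive_unique; auto).
    field; auto.
Qed.

Lemma lim_ge (g : R -> R) L c s : 0 < s -> filterlim g (at_right 0) (locally L) ->
  (forall t, 0 < t < s -> g t <= c) -> L <= c.
Proof.
  intros Hs Hg H.
  assert (B := filterlim_le (F := at_right 0) g (fun _ => c) L c).
  simpl in B. apply B; auto.
  - generalize (at_right0_lt s Hs). apply filter_imp. exact H.
  - apply filterlim_const.
Qed.

Lemma lim_le (g : R -> R) L c s : 0 < s -> filterlim g (at_right 0) (locally L) ->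
  (forall t, 0 < t < s -> c <= g t) -> c <= L.
Proof.
  intros Hs Hg H.
  assert (B := filterlim_le (F := at_right 0) (fun _ => c) g c L).
  simpl in B. apply B; auto.
  - generalize (at_right0_lt s Hs). apply filter_imp. exact H.
  - apply filterlim_const.
Qed.

Lemma locally_int a b s : a < s < b -> locally s (fun t => a < t < b).
Proof.
  intros Hs. assert (H : 0 < Rmin (s - a) (b - s)) by (apply Rmin_glb_lt; lra).
  exists (mkposreal _ H). intros y Hy.
  unfold ball in Hy; simpl in Hy; unfold AbsRing_ball, abs, minus, plus, opp in Hy; simpl in Hy.
  apply Rabs_def2 in Hy. generalize (Rmin_l (s - a) (b - s)) (Rmin_r (s - a) (b - s)). lra.
Qed.

Lemma incr_on (f df : R -> R) a b :
  (forall x, a < x < b -> is_derive f x (df x)) -> (forall x, a < x < b -> 0 < df x) ->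
  forall x y, a < x -> x < y -> y < b -> f x < f y.
Proof.
  intros H1 H2 x y Hx Hxy Hy.
  apply (incr_function f (Finite a) (Finite b) df); simpl; auto.
  all: intros; first [apply H1 | apply H2]; lra.
Qed.

Lemma part1 (rho P : R -> R)
  (Hrho : forall p, 0 < p -> 0 < rho p)
  (Heta : forall p, 0 < p -> ex_RInt_gen (fun x => / rho x) (at_right 0) (at_point p))
  (HP : forall p, 0 < p -> P (eos_eta rho p) = p)
  (Hn : forall p, 0 < p ->
     ex_derive (fun x => rho (P x)) (eos_eta rho p) /\
     0 <= index_fun rho P (eos_eta rho p) < 5) :
  (forall (Rad pc : R) (m p : R -> R), 0 < Rad -> 0 < pc ->
     (forall r, 0 < r < Rad ->
        0 < p r /\
        is_derive m r (4 * PI * r ^ 2 * rho (p r)) /\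
        is_derive p r (- (m r * rho (p r)) / r ^ 2)) ->
     filterlim m (at_right 0) (locally 0) ->
     filterlim p (at_right 0) (locally pc) ->
     forall r, 0 < r < Rad -> Phi (U_var rho m p r) (Q_var rho m p r) > 0).
Proof.
  intros Rad pc m p HRad Hpc Hsol Hm Hp r Hr.
  assert (Hd : forall q, 0 < q -> ex_derive (fun x => rho (P x)) (eos_eta rho q)) by (intros; apply Hn; auto).
  assert (pp : forall s, 0 < s < Rad -> 0 < p s) by (intros; apply Hsol; auto).
  assert (dm : forall s, 0 < s < Rad -> is_derive m s (4 * PI * s ^ 2 * rho (p s))) by (intros; apply Hsol; auto).
  assert (dp : forall s, 0 < s < Rad -> is_derive p s (- (m s * rho (p s)) / s ^ 2)) by (intros; apply Hsol; auto).
  assert (rp : forall s, 0 < s < Rad -> 0 < rho (p s)) by (intros; apply Hrho, pp; auto).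
  assert (minc : forall x y, 0 < x -> x < y -> y < Rad -> m x < m y).
  { apply (incr_on m (fun s => 4 * PI * s ^ 2 * rho (p s))); auto.
    intros x Hx. generalize (rp x Hx) PI_RGT_0. intros. apply Rmult_lt_0_compat; [|auto].
    apply Rmult_lt_0_compat; [lra|]. apply pow_lt; lra. }
  assert (mnn : forall s, 0 < s < Rad -> 0 <= m s).
  { intros s Hs. apply (lim_ge m 0 (m s) s); [lra|auto|]. intros t Ht. left; apply minc; lra. }
  assert (mpos : forall s, 0 < s < Rad -> 0 < m s).
  { intros s Hs. apply Rle_lt_trans with (m (s/2)). apply mnn; lra. apply minc; lra. }
  assert (pdec : forall x y, 0 < x -> x < y -> y < Rad -> - p x < - p y).
  { apply (incr_on (fun s => - p s) (fun s => m s * rho (p s) / s ^ 2)).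
    - intros x Hx. replace (m x * rho (p x) / x ^ 2) with (opp (- (m x * rho (p x)) / x ^ 2))
        by (unfold opp; simpl; field; lra).
      apply (is_derive_opp p). apply dp; auto.
    - intros x Hx. apply Rdiv_lt_0_compat. apply Rmult_lt_0_compat; auto. apply pow_lt; lra. }
  assert (ple : forall s, 0 < s < Rad -> p s <= pc).
  { intros s Hs. apply (lim_le p pc (p s) s); [lra|auto|]. intros t Ht.
    left. generalize (pdec t s ltac:(lra) ltac:(lra) ltac:(lra)). lra. }
  set (E := fun s => eos_eta rho (p s)).
  assert (dE : forall s, 0 < s < Rad -> is_derive E s (- m s / s ^ 2)).
  { intros s Hs.
    assert (D := is_derive_comp (eos_eta rho) p s _ _ (eta_deriv rho P Hrho Heta HP Hd (p s) (pp s Hs)) (dp s Hs)).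
    replace (- m s / s ^ 2) with (scal (- (m s * rho (p s)) / s ^ 2) (/ rho (p s))).
    exact D. unfold scal; simpl; unfold mult; simpl. generalize (rp s Hs); intro. field. split; lra. }
  assert (Edec : forall x y, 0 < x -> x < y -> y < Rad -> - E x < - E y).
  { apply (incr_on (fun s => - E s) (fun s => m s / s ^ 2)).
    - intros x Hx. replace (m x / x ^ 2) with (opp (- m x / x ^ 2))
        by (unfold opp; simpl; field; lra).
      apply (is_derive_opp E). apply dE; auto.
    - intros x Hx. apply Rdiv_lt_0_compat. apply mpos; auto. apply pow_lt; lra. }
  assert (Epos : forall s, 0 < s < Rad -> 0 < E s).
  { intros s Hs. apply Rle_lt_trans with (E ((s + Rad)/2)).
    - apply eta_nonneg; auto. apply pp; lra.
    - generalize (Edec s ((s + Rad)/2) ltac:(lra) ltac:(lra) ltac:(lra)). lra. }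
  set (K := eos_eta rho pc).
  assert (EleK : forall s, 0 < s < Rad -> E s <= K).
  { intros s Hs. unfold E, K. rewrite (eta_split rho Heta (p s) pc (pp s Hs) Hpc).
    assert (0 <= RInt (fun x => / rho x) (p s) pc).
    { apply RInt_ge_0. apply ple; auto. apply eta_exRInt; auto.
      intros x Hx. left. apply Rinv_0_lt_compat, Hrho. generalize (pp s Hs). lra. }
    lra. }
  set (g := fun x => rho (P x)).
  set (Rh := fun s => rho (p s)).
  assert (dR : forall s, 0 < s < Rad -> is_derive Rh s (- m s / s ^ 2 * Derive g (E s))).
  { intros s Hs.
    assert (D := is_derive_comp g E s _ _ (Derive_correct g (E s) (Hd (p s) (pp s Hs))) (dE s Hs)).
    apply (is_derive_ext_loc (fun t => g (E t))).
    - generalize (locally_int 0 Rad s Hs). apply filter_imp. intros t Ht.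
      unfold g, E, Rh. rewrite HP; auto.
    - exact D. }
  set (G := fun s => 4*PI*s^3*Rh s*E s + 3*(m s)^2/s - 3*m s*E s).
  assert (Ginc : forall x y, 0 < x -> x < y -> y < Rad -> G x < G y).
  { apply (incr_on G (fun s => 4 * PI * s * m s * (5 * Rh s - E s * Derive g (E s)))).
    - intros s Hs. eapply is_derive_ext; [intro t; reflexivity|].
      replace (4 * PI * s * m s * (5 * Rh s - E s * Derive g (E s))) with
        (12*PI*s^2*Rh s*E s + 4*PI*s^3*((- m s / s ^ 2 * Derive g (E s))*E s + Rh s*(- m s / s ^ 2))
         + 6*m s*(4 * PI * s ^ 2 * Rh s)/s - 3*(m s)^2/s^2
         - 3*((4 * PI * s ^ 2 * Rh s) * E s + m s * (- m s / s ^ 2))).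
      + apply G_deriv; [apply dm; auto|apply dR; auto|apply dE; auto|lra].
      + field; lra.
    - intros s Hs.
      destruct (Hn (p s) (pp s Hs)) as [_ [_ Hlt]].
      unfold index_fun in Hlt. rewrite HP in Hlt by (apply pp; auto). fold E g in Hlt.
      change (rho (p s)) with (Rh s) in Hlt.
      assert (HR : 0 < Rh s) by (apply rp; auto).
      assert (E s * Derive g (E s) < 5 * Rh s).
      { replace (E s * Derive g (E s)) with (E s / Rh s * Derive g (E s) * Rh s) by (field; lra).
        apply Rmult_lt_compat_r with (r := Rh s) in Hlt; [exact Hlt|lra]. }
      apply Rmult_lt_0_compat; [|lra].
      apply Rmult_lt_0_compat; [|apply mpos; auto].
      generalize PI_RGT_0; intro; apply Rmult_lt_0_compat; lra. }
  assert (Glow : forall s, 0 < s < Rad -> -3 * K * m s <= G s).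
  { intros s Hs. unfold G.
    assert (0 <= 4 * PI * s ^ 3 * Rh s * E s).
    { generalize PI_RGT_0 (rp s Hs : 0 < Rh s) (Epos s Hs) (pow_lt s 3 ltac:(lra)). intros.
      left. apply Rmult_lt_0_compat; [|lra]. apply Rmult_lt_0_compat; [|lra]. apply Rmult_lt_0_compat; [|lra]. apply Rmult_lt_0_compat; lra. }
    assert (0 <= 3 * m s ^ 2 / s).
    { apply Rle_mult_inv_pos; [|lra]. generalize (pow2_ge_0 (m s)); lra. }
    assert (m s * E s <= m s * K) by (apply Rmult_le_compat_l; [left; apply mpos|apply EleK]; auto).
    lra. }
  assert (G2 : 0 <= G (r/2)).
  { assert (Lm : filterlim (fun t => -3 * K * m t) (at_right 0) (locally (-3 * K * 0))).
    { apply (filterlim_comp _ _ _ m (fun x => -3 * K * x) _ (locally 0)); auto.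
      apply (continuous_mult (fun _ => -3 * K) (fun x => x) 0).
      apply continuous_const. apply continuous_id. }
    rewrite Rmult_0_r in Lm.
    apply (lim_ge (fun t => -3 * K * m t) 0 (G (r/2)) (r/2)); [lra|exact Lm|].
    intros t Ht. apply Rle_trans with (G t). apply Glow; lra. left; apply Ginc; lra. }
  assert (Gr : 0 < G r) by (apply Rle_lt_trans with (G (r/2)); auto; apply Ginc; lra).
  assert (Hm0 := mpos r Hr). assert (HE0 := Epos r Hr). assert (HR0 : 0 < Rh r) by (apply rp; auto).
  assert (HPI := PI_RGT_0).
  unfold Phi, U_var, Q_var, u_var, q_var.
  change (rho (p r)) with (Rh r). change (eos_eta rho (p r)) with (E r).
  unfold G in Gr.
  set (mr := m r) in *. set (Er := E r) in *. set (Rr := Rh r) in *.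
  assert (Hu : 0 < 4 * PI * r ^ 3 * Rr / mr).
  { apply Rdiv_lt_0_compat; auto. apply Rmult_lt_0_compat; [|lra].
    apply Rmult_lt_0_compat; [lra|]. apply pow_lt; lra. }
  assert (Hq : 0 < mr / (r * Er)) by (apply Rdiv_lt_0_compat; auto; apply Rmult_lt_0_compat; lra).
  set (u := 4 * PI * r ^ 3 * Rr / mr) in *. set (q := mr / (r * Er)) in *.
  assert (Key : u + 3 * q - 3 = (4 * PI * r ^ 3 * Rr * Er + 3 * mr ^ 2 / r - 3 * mr * Er) / (mr * Er)).
  { unfold u, q. field. repeat split; lra. }
  assert (Hpos : 0 < u + 3 * q - 3).
  { rewrite Key. apply Rdiv_lt_0_compat; auto. apply Rmult_lt_0_compat; lra. }
  replace ((4 - 7 * (q / (1 + q))) * (u / (1 + u)) - 3 * (1 - 2 * (q / (1 + q))))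
    with ((u + 3 * q - 3) / ((1 + u) * (1 + q))) by (field; lra).
  apply Rlt_gt, Rdiv_lt_0_compat; auto. apply Rmult_lt_0_compat; lra.
Qed.

Lemma part2 (nf : R -> R) (a : R) (Uf Qf Wf : R -> R) (l0 : R) :
     is_derive Uf l0 (FU nf (Uf l0) (Qf l0) (Wf l0)) ->
     is_derive Qf l0 (FQ (Uf l0) (Qf l0)) ->
     0 < Uf l0 < 1 -> 0 < Qf l0 < 1 ->
     Phi (Uf l0) (Qf l0) = 0 ->
     Qf l0 <= 1 / 2 /\
     is_derive (fun l => Phi (Uf l) (Qf l)) l0
       (3 * (1 - 2 * Qf l0) * (1 - Uf l0) ^ 2 * Qf l0 * (5 - nf (Wf l0))).
Proof.
  intros dU dQ HU HQ H0.
  unfold Phi in *.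
  set (U := Uf l0) in *. set (Q := Qf l0) in *.
  assert (HQ47 : 4 - 7 * Q <> 0) by (intro E; assert (Q = 4/7) by lra; subst Q; nra).
  assert (HUe : U = 3 * (1 - 2 * Q) / (4 - 7 * Q)) by (field_simplify_eq; lra).
  split.
  { destruct (Rle_dec Q (1/2)) as [h|h]; auto.
    exfalso. destruct (Rlt_dec Q (4/7)).
    - nra.
    - nra. }
  evar (d : R).
  assert (D : is_derive (fun l => (4 - 7 * Qf l) * Uf l - 3 * (1 - 2 * Qf l)) l0 d).
  { apply (is_derive_minus (fun l => (4 - 7 * Qf l) * Uf l) (fun l => 3 * (1 - 2 * Qf l))).
    - apply (is_derive_mult (fun l => 4 - 7 * Qf l) Uf).
      + apply (is_derive_minus (fun _ => 4) (fun l => 7 * Qf l)); [apply is_derive_const|].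
        apply (is_derive_scal Qf). exact dQ.
      + exact dU.
      + intros; apply Rmult_comm.
    - apply (is_derive_scal (fun l => 1 - 2 * Qf l)).
      apply (is_derive_minus (fun _ => 1) (fun l => 2 * Qf l)); [apply is_derive_const|].
      apply (is_derive_scal Qf). exact dQ. }
  subst d.
  eapply is_derive_ext; [intro t; reflexivity|].
  eapply is_derive_ext; [intro t; reflexivity|].
  match goal with |- is_derive ?f _ ?v => replace v with (minus (plus (mult (minus zero (scal 7 (FQ U Q))) U) (mult (4 - 7 * Q) (FU nf U Q (Wf l0)))) (scal 3 (minus zero (scal 2 (FQ U Q))))) end.
  exact D.
  unfold minus, plus, scal, zero, opp; simpl; unfold mult; simpl.
  unfold FU, FQ. rewrite HUe. field. exact HQ47.
Qed.

Theorem mainTheorem8 (rho P : R -> R)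
  (Hrho : forall p, 0 < p -> 0 < rho p)
  (Heta : forall p, 0 < p -> ex_RInt_gen (fun x => / rho x) (at_right 0) (at_point p))
  (HP : forall p, 0 < p -> P (eos_eta rho p) = p)
  (Hn : forall p, 0 < p ->
     ex_derive (fun x => rho (P x)) (eos_eta rho p) /\
     0 <= index_fun rho P (eos_eta rho p) < 5) :
  (forall (Rad pc : R) (m p : R -> R), 0 < Rad -> 0 < pc ->
     (forall r, 0 < r < Rad ->
        0 < p r /\
        is_derive m r (4 * PI * r ^ 2 * rho (p r)) /\
        is_derive p r (- (m r * rho (p r)) / r ^ 2)) ->
     filterlim m (at_right 0) (locally 0) ->
     filterlim p (at_right 0) (locally pc) ->
     forall r, 0 < r < Rad -> Phi (U_var rho m p r) (Q_var rho m p r) > 0)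
  /\
  (forall (a : R) (Uf Qf Wf : R -> R) (l0 : R), 0 < a ->
     is_derive Uf l0 (FU (nOmega rho P a) (Uf l0) (Qf l0) (Wf l0)) ->
     is_derive Qf l0 (FQ (Uf l0) (Qf l0)) ->
     is_derive Wf l0 (FW a (Uf l0) (Qf l0) (Wf l0)) ->
     0 < Uf l0 < 1 -> 0 < Qf l0 < 1 -> 0 < Wf l0 < 1 ->
     Phi (Uf l0) (Qf l0) = 0 ->
     Qf l0 <= 1 / 2 /\
     is_derive (fun l => Phi (Uf l) (Qf l)) l0
       (3 * (1 - 2 * Qf l0) * (1 - Uf l0) ^ 2 * Qf l0 * (5 - nOmega rho P a (Wf l0)))).
Proof.
  split.
  - apply (part1 rho P); auto.
  - intros a Uf Qf Wf l0 Ha dU dQ dW HU HQ HW H0.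
    apply (part2 (nOmega rho P a) a Uf Qf Wf l0); auto.
Qed.
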